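(* For every integer $r \geq 2$, \[n(r,3,3) = \begin{cases} r + r/2 & \text{if } r \text{ is even;}\\ r + \lceil r/2\rceil + 1 & \text{if } r \text{ is odd and } \lceil r/2\rceil \text{ is even;}\\ r + \lceil r/2\rceil + 2 & \text{if } r \text{ is odd and } \lceil r/2\rceil \text{ is odd.}\end{cases}\]
   Context: All graphs are finite and simple. For integers $r\geq 2$, $g\geq 3$, $\chi\geq 2$, an $(r,g,\chi)$-graph is an $r$-regular graph with girth (length of a shortest cycle) exactly $g$ and chromatic number exactly $\chi$. An $(r,g,\chi)$-cage is an $(r,g,\chi)$-graph of minimum order, and $n(r,g,\chi)$ denotes the order of an $(r,g,\chi)$-cage, i.e. the minimum number of vertices of an $(r,g,\chi)$-graph. *)

(* Defs.v *)
From mathcomp Require Import all_boot.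
Set Implicit Arguments. Unset Strict Implicit. Unset Printing Implicit Defensive.

Definition simple_graph (T : finType) (e : rel T) : Prop :=
  symmetric e /\ irreflexive e.

Definition regular (T : finType) (e : rel T) (r : nat) : Prop :=
  forall v : T, #|[pred w | e v w]| = r.

Definition has_cycle_of_length (T : finType) (e : rel T) (k : nat) : Prop :=
  exists s : seq T, [/\ size s = k, 3 <= k, uniq s & cycle e s].

Definition has_girth (T : finType) (e : rel T) (g : nat) : Prop :=
  has_cycle_of_length e g /\ (forall k, k < g -> ~ has_cycle_of_length e k).

Definition colorable (T : finType) (e : rel T) (k : nat) : Prop :=
  exists f : T -> 'I_k, forall x y, e x y -> f x != f y.

Definition has_chromatic_number (T : finType) (e : rel T) (chi : nat) : Prop :=
  colorable e chi /\ (forall k, k < chi -> ~ colorable e k).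

Definition rgchi_graph (T : finType) (e : rel T) (r g chi : nat) : Prop :=
  [/\ simple_graph e, regular e r, has_girth e g & has_chromatic_number e chi].

(* n is the order of an (r,g,chi)-cage, i.e. n = n(r,g,chi): there is an
   (r,g,chi)-graph on n vertices and every (r,g,chi)-graph has >= n vertices. *)
Definition is_cage_order (r g chi n : nat) : Prop :=
  (exists e : rel 'I_n, rgchi_graph e r g chi) /\
  (forall (T : finType) (e : rel T), rgchi_graph e r g chi -> n <= #|T|).

(* Main.v *)
Require Import Defs.
From mathcomp Require Import all_boot zify.
Lemma card_ord_count n (P : pred nat) : #|[pred j : 'I_n | P (val j)]| = count P (iota 0 n).
Proof.
rewrite cardE /enum_mem size_filter -enumT -val_enum_ord count_map.
by apply: eq_count => j.
Qed.
Lemma count_range n lo hi : lo <= hi <= n -> count (fun j => lo <= j < hi) (iota 0 n) = hi - lo.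
Proof.
move=> /andP[h1 h2].
have -> : n = lo + ((hi - lo) + (n - hi)) by lia.
rewrite iotaD iotaD !count_cat.
rewrite (eq_in_count (a2 := pred0)); last by move=> j; rewrite mem_iota /=; lia.
rewrite (eq_in_count (s:= iota (0 + lo) (hi - lo)) (a2 := predT)); last by move=> j; rewrite mem_iota /=; lia.
rewrite (eq_in_count (s:= iota (0 + lo + (hi - lo)) _) (a2 := pred0)); last by move=> j; rewrite mem_iota /=; lia.
rewrite !count_pred0 count_predT size_iota; lia.
Qed.

Lemma tri_girth (T : finType) (e : rel T) x y z :
  irreflexive e -> e x y -> e y z -> e z x -> has_girth e 3.
Proof.
move=> irr exy eyz ezx; split.
  exists [:: x; y; z]; split => //=; last by rewrite exy eyz ezx.
  have nxy : x != y by apply/eqP => E; subst; rewrite irr in exy.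
  have nyz : y != z by apply/eqP => E; subst; rewrite irr in eyz.
  have nzx : z != x by apply/eqP => E; subst; rewrite irr in ezx.
  by rewrite !inE !negb_or nxy nyz eq_sym nzx.
move=> k hk [s [hs h3 _ _]]; lia.
Qed.

Lemma tri_chi (T : finType) (e : rel T) x y z (f : T -> 'I_3) :
  (forall u v, e u v -> f u != f v) -> e x y -> e y z -> e z x ->
  has_chromatic_number e 3.
Proof.
move=> hf exy eyz ezx; split; first by exists f.
move=> k hk [g hg].
have := hg _ _ exy; have := hg _ _ eyz; have := hg _ _ ezx.
rewrite -!val_eqE /=.
have := ltn_ord (g x); have := ltn_ord (g y); have := ltn_ord (g z).
lia.
Qed.

Definition colr (c1 c2 i : nat) : nat := if i < c1 then 0 else if i < c2 then 1 else 2.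
Definition Erel c1 c2 (f1 f2 : nat -> nat) (i j : nat) : bool :=
  (colr c1 c2 i != colr c1 c2 j) && (j != f1 i) && (j != f2 i).

Lemma construct n r c1 c2 (f1 f2 : nat -> nat) :
  (forall i, i < n -> f1 i < n /\ f1 (f1 i) = i) ->
  (forall i, i < n -> f2 i < n /\ f2 (f2 i) = i) ->
  (forall i, i < n -> count (Erel c1 c2 f1 f2 i) (iota 0 n) = r) ->
  (exists x y z, [/\ x < n, y < n, z < n &
      [/\ Erel c1 c2 f1 f2 x y, Erel c1 c2 f1 f2 y z & Erel c1 c2 f1 f2 z x]]) ->
  exists e : rel 'I_n, rgchi_graph e r 3 3.
Proof.
move=> hf1 hf2 hdeg [x [y [z [hx hy hz [exy eyz ezx]]]]].
pose e := fun i j : 'I_n => Erel c1 c2 f1 f2 i j.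
have irr : irreflexive e by move=> i; rewrite /e /Erel eqxx.
have sym : symmetric e.
  move=> i j; rewrite /e /Erel eq_sym; congr (_ && _ && _).
    have [h1 h2] := hf1 _ (ltn_ord i); have [h3 h4] := hf1 _ (ltn_ord j).
    congr (~~ _); apply/eqP/eqP => E; [by rewrite E h2|by rewrite E h4].
  have [h1 h2] := hf2 _ (ltn_ord i); have [h3 h4] := hf2 _ (ltn_ord j).
  congr (~~ _); apply/eqP/eqP => E; [by rewrite E h2|by rewrite E h4].
pose X := Ordinal hx; pose Y := Ordinal hy; pose Z := Ordinal hz.
have eXY : e X Y by []. have eYZ : e Y Z by []. have eZX : e Z X by [].
exists e; split.
- by [].
- move=> v; rewrite -(hdeg _ (ltn_ord v)) -card_ord_count; apply: eq_card => w //.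
- exact: tri_girth eXY eYZ eZX.
- apply: (@tri_chi _ e X Y Z (fun i => inord (colr c1 c2 i))) eXY eYZ eZX.
  move=> u v /andP[/andP[h _] _]; rewrite -val_eqE /= !inordK //;
  rewrite /colr; case: ifP => _ //; case: ifP => _ //.
Qed.

Lemma count_andC (P Q : pred nat) s :
  count (fun j => P j && ~~ Q j) s + count (fun j => P j && Q j) s = count P s.
Proof. elim: s => //= a s IH; case: (P a); case: (Q a) => /=; lia. Qed.

Definition csize c1 c2 n i := if i < c1 then c1 else if i < c2 then c2 - c1 else n - c2.

Lemma count_other n c1 c2 i : c1 <= c2 <= n ->
  count (fun j => colr c1 c2 i != colr c1 c2 j) (iota 0 n) = n - csize c1 c2 n i.
Proof.
move=> h.
pose lo := if i < c1 then 0 else if i < c2 then c1 else c2.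
pose hi := if i < c1 then c1 else if i < c2 then c2 else n.
have hc : count (fun j => lo <= j < hi) (iota 0 n) = csize c1 c2 n i.
  rewrite count_range /lo /hi /csize; repeat (case: ifP => ?); lia.
have := count_predC (fun j => lo <= j < hi) (iota 0 n).
rewrite size_iota hc => E.
suff -> : count (fun j => colr c1 c2 i != colr c1 c2 j) (iota 0 n) =
  count (predC (fun j => lo <= j < hi)) (iota 0 n) by lia.
apply: eq_in_count => j; rewrite mem_iota /= /colr /lo /hi.
move=> hj; repeat (case: ifP => ?); lia.
Qed.

Lemma deg_formula n c1 c2 f1 f2 i (P : pred nat) k : c1 <= c2 <= n ->
  (forall j, j < n -> ((colr c1 c2 i != colr c1 c2 j) && ((j == f1 i) || (j == f2 i))) = P j) ->
  count P (iota 0 n) = k ->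
  count (Erel c1 c2 f1 f2 i) (iota 0 n) = n - csize c1 c2 n i - k.
Proof.
move=> h hP hk.
have := count_andC (fun j => colr c1 c2 i != colr c1 c2 j) (fun j => (j == f1 i) || (j == f2 i)) (iota 0 n).
have hc : count (fun j => (colr c1 c2 i != colr c1 c2 j) && ((j == f1 i) || (j == f2 i))) (iota 0 n) = k.
  by rewrite -hk; apply: eq_in_count => j; rewrite mem_iota => /andP[_ hj]; apply: hP.
rewrite count_other // hc => E.
rewrite -E addnK; apply: eq_count => j.
by rewrite /Erel negb_or andbA.
Qed.

Lemma count1 n a : a < n -> count (fun j => j == a) (iota 0 n) = 1.
Proof. move=> h; rewrite (count_uniq_mem a (iota_uniq 0 n)) mem_iota; lia. Qed.

Lemma count2 n a b : a < n -> b < n -> a != b ->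
  count (fun j => (j == a) || (j == b)) (iota 0 n) = 2.
Proof.
move=> ha hb hab.
have := count_predUI (fun j => j == a) (fun j => j == b) (iota 0 n).
rewrite (eq_count (a1 := predI _ _) (a2 := pred0)); last first.
  by move=> j /=; apply/negP => /andP[/eqP -> /eqP E]; rewrite E eqxx in hab.
rewrite count_pred0 addn0 (count1 _ _ ha) (count1 _ _ hb) => E; exact: E.

Qed.

Ltac ifs := repeat (case: ifP => ?).

Lemma case1 m : 0 < m -> exists e : rel 'I_(3*m), rgchi_graph e (2*m) 3 3.
Proof.
move=> hm.
apply: (@construct (3*m) (2*m) m (2*m) id id).
- move=> i hi; split => //.
- move=> i hi; split => //.
- move=> i hi.
  rewrite (@deg_formula _ _ _ _ _ _ pred0 0) //; first by rewrite /csize; ifs; lia.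
  + lia.
  + move=> j hj /=; rewrite orbb; apply/negP => /andP[h /eqP E]; subst; by rewrite eqxx in h.
  + exact: count_pred0.
- exists 0, m, (2*m); split; try lia; split; rewrite /Erel /colr /=; ifs; lia.
Qed.

Definition g2 q x := if x < 3*q then x + 3*q else x - 3*q.

Lemma case2 q : 0 < q -> exists e : rel 'I_(6*q), rgchi_graph e (4*q-1) 3 3.
Proof.
move=> hq.
apply: (@construct (6*q) (4*q-1) (2*q) (4*q) (g2 q) id).
- move=> i hi; rewrite /g2; ifs; lia.
- move=> i hi; split => //.
- move=> i hi.
  rewrite (@deg_formula _ _ _ _ _ _ (fun j => j == g2 q i) 1) //.
  + rewrite /csize; ifs; lia.
  + lia.
  + move=> j hj /=; rewrite /colr /g2; ifs; lia.
  + apply: count1; rewrite /g2; ifs; lia.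
- exists 0, (2*q), (4*q); split; try lia; split; rewrite /Erel /colr /g2 /=; ifs; lia.
Qed.

Definition h1 p x :=
  if x < p then x + 2*p else if x < 2*p then x + 4*p - 2
  else if x < 3*p then x - 2*p else if x < 4*p-1 then x + p - 1
  else if x < 5*p-2 then x - (p-1) else x - (4*p-2).
Definition h2 p x := if x < 2*p then x else if x < 4*p-1 then x + (2*p-1) else x - (2*p-1).

Lemma case3 p : 1 < p -> exists e : rel 'I_(6*p-2), rgchi_graph e (4*p-3) 3 3.
Proof.
move=> hp.
apply: (@construct (6*p-2) (4*p-3) (2*p) (4*p-1) (h1 p) (h2 p)).
- move=> i hi; rewrite /h1; ifs; lia.
- move=> i hi; rewrite /h2; ifs; lia.
- move=> i hi.
  case: (ltnP i (2*p)) => hA.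
  + rewrite (@deg_formula _ _ _ _ _ _ (fun j => j == h1 p i) 1) //.
    * rewrite /csize; ifs; lia.
    * lia.
    * move=> j hj /=; rewrite /colr /h1 /h2; ifs; lia.
    * apply: count1; rewrite /h1; ifs; lia.
  + rewrite (@deg_formula _ _ _ _ _ _ (fun j => (j == h1 p i) || (j == h2 p i)) 2) //.
    * rewrite /csize; ifs; lia.
    * lia.
    * move=> j hj /=; rewrite /colr /h1 /h2; ifs; lia.
    * apply: count2; rewrite /h1 /h2; ifs; lia.
- exists 0, (2*p+1), (4*p-1); split; try lia; split; rewrite /Erel /colr /h1 /h2 /=; ifs; lia.
Qed.

Lemma handshake (T : finType) (e : rel T) : symmetric e -> irreflexive e ->
  ~~ odd (\sum_v #|[set w | e v w]|).
Proof.
move=> sym irr.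
pose lt (v w : T) := (enum_rank v < enum_rank w)%N.
have E1 : forall v, #|[set w | e v w]| = \sum_w ((e v w && lt v w) + (e v w && lt w v)).
  move=> v; rewrite -sum1_card big_mkcond /=; apply: eq_bigr => w _; rewrite inE.
  case evw: (e v w) => //=.
  have nvw : v != w by apply/eqP => E; subst; rewrite irr in evw.
  have : enum_rank v != enum_rank w by apply: contra nvw => /eqP /enum_rank_inj ->.
  rewrite -val_eqE /lt /=; lia.
under eq_bigr => v _ do rewrite E1 big_split /=.
rewrite big_split /= exchange_big /=.
have -> : \sum_j \sum_i ((e i j && lt i j) : nat) = \sum_j \sum_i ((e j i && lt i j) : nat).
  by apply: eq_bigr => i _; apply: eq_bigr => j _; rewrite sym.
by rewrite addnn odd_double.
Qed.

Lemma lower (T : finType) (e : rel T) r : rgchi_graph e r 3 3 ->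
  3 * r <= 2 * #|T| /\ (odd r -> 2 * #|T| != 3 * r + 1 /\ ~~ odd #|T|).
Proof.
case=> [[sym irr] reg [[s [hs _ hu hc]] _] [[f hf] _]].
case: s hs hu hc => [|x [|y [|z [|]]]] //= _ hu.
rewrite andbT => /and3P[exy eyz ezx].
pose K c := [set w | f w == c].
pose N v := [set w | e v w].
have hN : forall v, #|N v| = r.
  by move=> v; rewrite -(reg v); apply: eq_card => w; rewrite inE.
have hsub : forall v, N v \subset ~: K (f v).
  by move=> v; apply/subsetP => w; rewrite !inE eq_sym => /hf.
have hle : forall v, r + #|K (f v)| <= #|T|.
  move=> v; rewrite -(cardsC (K (f v))) addnC leq_add2l -(hN v).
  exact: subset_leq_card.
have fxy := hf _ _ exy; have fyz := hf _ _ eyz; have fzx := hf _ _ ezx.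
have disj : forall c d, c != d -> #|K c :|: K d| = #|K c| + #|K d|.
  move=> c d hcd; rewrite cardsU.
  suff -> : K c :&: K d = set0 by rewrite cards0 subn0.
  apply/setP => w; rewrite !inE; apply/negP => /andP[/eqP -> /eqP E].
  by rewrite E eqxx in hcd.
have hsum : #|K (f x)| + #|K (f y)| + #|K (f z)| = #|T|.
  rewrite -addnA -disj // -(cardsC (K (f x))).
  suff -> : ~: K (f x) = K (f y) :|: K (f z) by [].
  apply/setP => w; rewrite !inE.
  move: fxy fyz fzx; rewrite -!val_eqE /=.
  have := ltn_ord (f w); have := ltn_ord (f x); have := ltn_ord (f y); have := ltn_ord (f z).
  lia.
have tight : forall v, r + #|K (f v)| = #|T| -> forall w, f w != f v -> e v w.
  move=> v hv w hw.
  have eq : #|N v| = #|~: K (f v)|.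
    by rewrite hN; move: (cardsC (K (f v))); lia.
  have := subset_cardP eq (hsub v) => /(_ w).
  rewrite !inE hw /= => ->. done.
have two : forall u v w, f u != f v -> f v != f w -> f w != f u ->
    r + #|K (f u)| = #|T| -> r + #|K (f v)| = #|T| -> #|K (f u)| + #|K (f v)| <= r.
  move=> u v w huv hvw hwu tu tv.
  rewrite -disj // -(hN w); apply: subset_leq_card; apply/subsetP => t.
  rewrite !inE => /orP[] /eqP ft; rewrite sym.
    apply: tight; first by rewrite ft.
    by rewrite ft.
  apply: tight; first by rewrite ft.
  by rewrite ft eq_sym.
have hx := hle x; have hy := hle y; have hz := hle z.
move: hx hy hz hsum (two) (@handshake _ _ sym irr); set n := #|T|; clear two; move=> hx hy hz hsum two hs.
split; first lia.
move=> hr; split.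
  apply/eqP => E.
  have : (r + #|K (f x)| = #|T| /\ r + #|K (f y)| = #|T|) \/
         (r + #|K (f y)| = #|T| /\ r + #|K (f z)| = #|T|) \/
         (r + #|K (f z)| = #|T| /\ r + #|K (f x)| = #|T|) by lia.
  case=> [[t1 t2]|[[t1 t2]|[t1 t2]]].
  - have := two _ _ _ fxy fyz fzx t1 t2; lia.
  - have := two _ _ _ fyz fzx fxy t1 t2; lia.
  - have := two _ _ _ fzx fxy fyz t1 t2; lia.
move: hs.
under eq_bigr => v _ do rewrite (hN v).
rewrite sum_nat_const oddM hr andbT => h; exact: h.
Qed.

(* ceil(r/2) is written (r.+1) %/ 2 *)
Theorem theorem3p2 (r : nat) (hr : 2 <= r) :
  is_cage_order r 3 3
    (if ~~ odd r then r + r %/ 2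
     else if ~~ odd (r.+1 %/ 2) then r + r.+1 %/ 2 + 1
     else r + r.+1 %/ 2 + 2).
Proof.
have hrm := odd_double_half r.
set m := r./2 in hrm.
have hmm := odd_double_half m.
set k := m./2 in hmm.
clearbody m k.
case: (boolP (odd r)) => hodd.
-
  rewrite hodd /= in hrm *.
  have -> : r.+1 %/ 2 = m + 1 by lia.
  have lb : forall (T : finType) (e : rel T), rgchi_graph e r 3 3 ->
      3 * m + 3 <= #|T| /\ (~~ odd m -> 3 * m + 4 <= #|T|).
    move=> T e h; have [h1 h23] := @lower _ _ _ h; have [h2 h3] := h23 hodd.
    have := odd_double_half #|T|; rewrite (negbTE h3) /= => hT.
    clear h23 h; move: h1 h2 hT; set n := #|T|; clearbody n => h1 h2 hT. split; first lia.
    move=> hm; rewrite (negbTE hm) in hmm; lia.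
  case: (boolP (odd m)) => hmo; rewrite /= oddD.
  + rewrite hmo /= in hmm *.
    have -> : r + (m + 1) + 1 = 6 * (k + 1) by lia.
    split; last by move=> T e h; have [h1 _] := lb T e h; lia.
    have -> : r = 4 * (k + 1) - 1 by lia.
    apply: case2; lia.
  + rewrite (negbTE hmo) /= in hmm *.
    have -> : r + (m + 1) + 2 = 6 * (k + 1) - 2 by lia.
    split; last by move=> T e h; have [_ h2] := lb T e h; have := h2 hmo; lia.
    have -> : r = 4 * (k + 1) - 3 by lia.
    apply: case3; lia.
- rewrite /=; rewrite (negbTE hodd) /= in hrm.
  have -> : r + r %/ 2 = 3 * m by lia.
  split; last by move=> T e h; have [h1 _] := @lower _ _ _ h; lia.
  have -> : r = 2 * m by lia.
  apply: case1; lia.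
Qed.
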